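(* Let $Z$ be any $n\times n$ complex matrix with singular values $r_1,\dots,r_n$, and let $U$ be any $n\times n$ unitary matrix. Then $$\prod_{k=1}^n\frac{|1-r_k|}{1+r_k}\le \frac{|\det(I-Z^*Z)|}{|\det(I-UZ)|^2},$$ where a fraction with zero denominator is interpreted as $+\infty$.
   Context: $Z^*$ denotes the conjugate transpose of $Z$ and $I$ the $n\times n$ identity matrix. *)

(* Defs.v *)
(* Complex scalars: an arbitrary numClosedFieldType C
   (algebraically closed field with conjugation and norm, e.g. algC). *)
From HB Require Import structures.
From mathcomp Require Import all_boot all_order all_algebra.
Set Implicit Arguments. Unset Strict Implicit. Unset Printing Implicit Defensive.
Import Order.TTheory GRing.Theory Num.Theory.
Local Open Scope ring_scope.

Definition ctmx (C : numClosedFieldType) (m n : nat) (A : 'M[C]_(m, n)) : 'M[C]_(n, m) :=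
  (map_mx Num.conj A)^T.

(* U is unitary: U U^* = I (for square matrices this is equivalent to U^* U = I) *)
Definition unitary_mx (C : numClosedFieldType) (n : nat) (U : 'M[C]_n) : Prop :=
  U *m ctmx U = 1%:M.

(* r_1..r_n are the singular values of Z: nonnegative reals whose squares
   are the eigenvalues of Z^* Z, counted with algebraic multiplicity. *)
Definition singular_values (C : numClosedFieldType) (n : nat) (Z : 'M[C]_n)
  (r : 'I_n -> C) : Prop :=
  (forall k, 0 <= r k) /\
  char_poly (ctmx Z *m Z) = \prod_(k < n) ('X - (r k ^+ 2)%:P).

(* Main.v *)
Require Import Defs.
From HB Require Import structures.
From mathcomp Require Import all_boot all_order all_algebra.
Set Implicit Arguments. Unset Strict Implicit. Unset Printing Implicit Defensive.
Import Order.TTheory GRing.Theory Num.Theory.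
Local Open Scope ring_scope.

Definition nrm2 (C : numClosedFieldType) (n : nat) (w : 'rV[C]_n) : C :=
  \sum_k `|w 0 k| ^+ 2.
Definition contr (C : numClosedFieldType) (n : nat) (M : 'M[C]_n) :=
  forall w : 'rV_n, nrm2 (w *m M) <= nrm2 w.
Definition Qb (C : numClosedFieldType) (n : nat) (b : 'I_n -> bool) : 'M[C]_n :=
  diag_mx (\row_k (b k)%:R).

Lemma nrm2_ge0 (C : numClosedFieldType) (n : nat) (w : 'rV[C]_n) : 0 <= nrm2 w.
Proof. by apply: sumr_ge0 => k _; rewrite exprn_ge0. Qed.

Lemma nrm2Z (C : numClosedFieldType) (n : nat) (c : C) (w : 'rV[C]_n) :
  nrm2 (c *: w) = `|c| ^+ 2 * nrm2 w.
Proof.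
rewrite /nrm2 mulr_sumr; apply: eq_bigr => k _.
by rewrite mxE normrM exprMn.
Qed.

Lemma nrm2_gt0 (C : numClosedFieldType) (n : nat) (w : 'rV[C]_n) :
  w != 0 -> 0 < nrm2 w.
Proof.
move=> wN0; rewrite lt_def nrm2_ge0 andbT; apply/eqP => h.
move/eqP: wN0; apply; apply/rowP => k; rewrite mxE.
have := @psumr_eq0P _ _ predT (fun k => `|w 0 k| ^+ 2) (fun k _ => exprn_ge0 2 (normr_ge0 _)) h k isT.
by move/eqP; rewrite expf_eq0 /= normr_eq0 => /eqP.
Qed.

Lemma nrm2_Qb (C : numClosedFieldType) (n : nat) (b : 'I_n -> bool) (v : 'rV[C]_n) :
  nrm2 (v *m Qb C b) <= nrm2 v.
Proof.
rewrite /nrm2 /Qb mul_mx_diag; apply: ler_sum => k _; rewrite !mxE.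
case: (b k); rewrite ?mulr1 // mulr0 normr0 expr0n /=.
exact: exprn_ge0.
Qed.

Lemma Qb_idem (C : numClosedFieldType) (n : nat) (b : 'I_n -> bool) :
  Qb C b *m Qb C b = Qb C b.
Proof.
rewrite /Qb mulmx_diag; congr diag_mx; apply/rowP => k; rewrite !mxE.
by case: (b k); rewrite ?mulr1 ?mulr0.
Qed.

Lemma eig_bound (C : numClosedFieldType) (n : nat) (b : 'I_n -> bool) (M : 'M[C]_n)
  (x : 'rV[C]_n) (l : C) :
  contr M -> x != 0 ->
  x *m (1%:M - Qb C b + Qb C b *m M) = l *: x -> `|l| <= 1.
Proof.
move=> cM xN0 hx.
set Q := Qb C b.
set w := x *m Q.
have hw : w *m M *m Q = l *: w.
  have e : x *m (1%:M - Q + Q *m M) *m Q = w *m M *m Q.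
    rewrite mulmxDr mulmxBr mulmx1 !mulmxDl mulNmx -mulmxA Qb_idem subrr add0r.
    by rewrite /w !mulmxA.
  by rewrite -e hx -scalemxAl.
have [w0|wN0] := eqVneq w 0.
  have : x = l *: x.
    rewrite -hx mulmxDr mulmxBr mulmx1 mulmxA -/w w0 mul0mx addr0.
    by rewrite subr0.
  move=> h; have : (1 - l) *: x = 0 by rewrite scalerBl scale1r -h subrr.
  move/eqP; rewrite scaler_eq0 (negbTE xN0) orbF subr_eq0 => /eqP <-.
  by rewrite normr1.
have h1 : `|l| ^+ 2 * nrm2 w <= nrm2 w.
  rewrite -nrm2Z -hw.
  apply: le_trans (nrm2_Qb _ _) _; exact: cM.
have hp := nrm2_gt0 wN0.
have h2 : `|l| ^+ 2 <= 1 by rewrite -(ler_pM2r hp) mul1r.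
by rewrite -(@expr_le1 _ 2).
Qed.

Lemma det_le1 (C : numClosedFieldType) (n : nat) (X : 'M[C]_n) :
  (forall l, eigenvalue X l -> `|l| <= 1) -> `|\det X| <= 1.
Proof.
move=> hl.
have [rs hrs] := closed_field_poly_normal (char_poly X).
have mon := char_poly_monic X.
rewrite (monicP mon) scale1r in hrs.
have hsz : size rs = n.
  by have := size_char_poly X; rewrite hrs size_prod_XsubC => -[].
have hdet : \det X = \prod_(z <- rs) z.
  have := char_poly_det X; rewrite hrs coef0_prod_XsubC hsz => /esym h.
  have s0 : ((-1) ^+ n : C) != 0 by rewrite signr_eq0.
  by apply: (mulfI s0); rewrite -h.
rewrite hdet normr_prod big_seq.
apply: (@le_trans _ _ (\prod_(z <- rs | z \in rs) (1 : C))); last by rewrite big1.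
apply: ler_prod => z zin; rewrite normr_ge0 /=; apply: hl.
by rewrite eigenvalue_root_char hrs root_prod_XsubC.
Qed.

Lemma det_Xb_le1 (C : numClosedFieldType) (n : nat) (b : 'I_n -> bool) (M : 'M[C]_n) :
  contr M -> `|\det (1%:M - Qb C b + Qb C b *m M)| <= 1.
Proof.
move=> cM; apply: det_le1 => l /eigenvalueP [x hx xN0].
exact: eig_bound cM xN0 hx.
Qed.

Lemma base_fact (C : numClosedFieldType) (n : nat) (a s : 'rV[C]_n) (M : 'M[C]_n) :
  (forall k, (a 0 k == 0) || (s 0 k == 0)) ->
  diag_mx a + diag_mx s *m M =
  diag_mx (\row_k (if s 0 k != 0 then s 0 k else a 0 k)) *m
    (1%:M - Qb C (fun k => s 0 k != 0) + Qb C (fun k => s 0 k != 0) *m M).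
Proof.
move=> h; rewrite /Qb !mul_diag_mx; apply/matrixP => i j; rewrite !mxE.
have := h i; case: (s 0 i =P 0) => [->|sN0] /=.
  by move=> _; rewrite !(mul0r, addr0, mul0rn, subr0) mulr_natr.
move=> /orP [/eqP ->|//]; rewrite mul1r mul0rn add0r.
by rewrite subrr add0r.
Qed.

Definition cnt (C : numClosedFieldType) (n : nat) (a s : 'rV[C]_n) :=
  #|[pred k : 'I_n | (a 0 k != 0) && (s 0 k != 0)]|.

Definition zer (C : numClosedFieldType) (n : nat) (a : 'rV[C]_n) (k : 'I_n) : 'rV[C]_n :=
  \row_j (if j == k then 0 else a 0 j).

Lemma cnt_zer (C : numClosedFieldType) (n : nat) (a s : 'rV[C]_n) (k : 'I_n) :
  (a 0 k != 0) && (s 0 k != 0) ->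
  (cnt a (zer s k)).+1 = cnt a s /\ (cnt (zer a k) s).+1 = cnt a s.
Proof.
move=> hk; rewrite /cnt (cardD1 k [pred k | (a 0 k != 0) && (s 0 k != 0)]).
rewrite inE hk add1n; split; congr S; apply: eq_card => j; rewrite !inE !mxE;
  by case: (j =P k) => [->|]; rewrite ?eqxx ?andbF //= ?andbT.
Qed.

Lemma key (C : numClosedFieldType) (n : nat) (M : 'M[C]_n) (a s : 'rV[C]_n) :
  contr M ->
  `|\det (diag_mx a + diag_mx s *m M)| <= \prod_k (`|a 0 k| + `|s 0 k|).
Proof.
move=> cM.
move: (leqnn (cnt a s)); move: {2}(cnt a s) => m.
elim: m a s => [|m IH] a s hm.
  have h : forall k, (a 0 k == 0) || (s 0 k == 0).
    move=> k; case: (boolP ((a 0 k == 0) || (s 0 k == 0))) => // /norP [ha hs].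
    have : (0 < cnt a s)%N by apply/card_gt0P; exists k; rewrite inE ha hs.
    by rewrite lt0n; move: hm; rewrite leqn0 => ->.
  rewrite base_fact // det_mulmx det_diag normrM.
  apply: (le_trans (ler_wpM2l (normr_ge0 _) (det_Xb_le1 _ cM))).
  rewrite mulr1 normr_prod; apply: ler_prod => k _; rewrite normr_ge0 mxE /=.
  by case: ifP => _; rewrite ?lerDr ?lerDl.
case: (leqP (cnt a s) m) => [hle|hlt]; first exact: IH.
have [k kP] : exists k, k \in [pred k : 'I_n | (a 0 k != 0) && (s 0 k != 0)].
  by apply/card_gt0P; apply: leq_ltn_trans hlt.
rewrite inE in kP.
have [c1 c2] := cnt_zer kP.
have e : \det (diag_mx a + diag_mx s *m M) =
   \det (diag_mx a + diag_mx (zer s k) *m M) + \det (diag_mx (zer a k) + diag_mx s *m M).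
  rewrite (@determinant_multilinear _ _ _ (diag_mx a + diag_mx (zer s k) *m M)
     (diag_mx (zer a k) + diag_mx s *m M) k 1 1) ?mul1r // !mul_diag_mx.
  - by apply/rowP => j; rewrite !mxE eqxx !mul1r mul0r addr0 mul0rn add0r.
  - rewrite /row'; apply/matrixP => i j; rewrite !mxE.
    have nk : (lift k i == k) = false by apply/negbTE; rewrite eq_sym neq_lift.
    by rewrite nk.
  - rewrite /row'; apply/matrixP => i j; rewrite !mxE.
    have nk : (lift k i == k) = false by apply/negbTE; rewrite eq_sym neq_lift.
    by rewrite nk.
rewrite e (le_trans (ler_normD _ _)) //.
have hb1 := IH a (zer s k) ltac:(by rewrite -ltnS c1).
have hb2 := IH (zer a k) s ltac:(by rewrite -ltnS c2).
have p1 : \prod_j (`|a 0 j| + `|zer s k 0 j|) =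
    `|a 0 k| * \prod_(j | j != k) (`|a 0 j| + `|s 0 j|).
  rewrite (bigD1 k) //= /zer !mxE eqxx normr0 addr0; congr (_ * _).
  by apply: eq_bigr => j /negbTE jk; rewrite !mxE jk.
have p2 : \prod_j (`|zer a k 0 j| + `|s 0 j|) =
    `|s 0 k| * \prod_(j | j != k) (`|a 0 j| + `|s 0 j|).
  rewrite (bigD1 k) //= /zer !mxE eqxx normr0 add0r; congr (_ * _).
  by apply: eq_bigr => j /negbTE jk; rewrite !mxE jk.
rewrite (bigD1 k) //= mulrDl; apply: lerD; [rewrite -p1 | rewrite -p2] => //.
Qed.
Lemma ctmx_spec (C : numClosedFieldType) m p (X : 'M[C]_(m, p)) :
  ctmx X = map_mx Num.conj (X ^T).
Proof. by rewrite /ctmx map_trmx. Qed.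

Lemma ctmxE (C : numClosedFieldType) m p (X : 'M[C]_(m, p)) i j :
  ctmx X i j = (X j i)^*.
Proof. by rewrite /ctmx !mxE. Qed.

Lemma ctmx_mul (C : numClosedFieldType) m p q (X : 'M[C]_(m, p)) (Y : 'M[C]_(p, q)) :
  ctmx (X *m Y) = ctmx Y *m ctmx X.
Proof. by rewrite /ctmx map_mxM trmx_mul. Qed.

Lemma ctmxK (C : numClosedFieldType) m p (X : 'M[C]_(m, p)) : ctmx (ctmx X) = X.
Proof.
rewrite /ctmx map_trmx trmxK -map_mx_comp; apply/matrixP => i j.
by rewrite !mxE /= conjCK.
Qed.

Lemma ctmx1 (C : numClosedFieldType) n : ctmx (1%:M : 'M[C]_n) = 1%:M.
Proof. by rewrite /ctmx map_mx1 trmx1. Qed.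

Lemma ctmxB (C : numClosedFieldType) m p (X Y : 'M[C]_(m, p)) :
  ctmx (X - Y) = ctmx X - ctmx Y.
Proof. by rewrite /ctmx map_mxB linearB. Qed.

Lemma det_ctmx (C : numClosedFieldType) n (X : 'M[C]_n) :
  \det (ctmx X) = (\det X)^*.
Proof. by rewrite /ctmx det_tr det_map_mx. Qed.

Lemma ctmx_diag (C : numClosedFieldType) n (v : 'rV[C]_n) :
  ctmx (diag_mx v) = diag_mx (map_mx Num.conj v).
Proof. by rewrite /ctmx map_diag_mx tr_diag_mx. Qed.

Lemma nrm2E (C : numClosedFieldType) n (w : 'rV[C]_n) : nrm2 w = (w *m ctmx w) 0 0.
Proof.
rewrite /nrm2 mxE; apply: eq_bigr => k _.
by rewrite /ctmx !mxE normCK.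
Qed.

Lemma quad_diag (C : numClosedFieldType) n (w q : 'rV[C]_n) :
  (w *m diag_mx q *m ctmx w) 0 0 = \sum_k q 0 k * `|w 0 k| ^+ 2.
Proof.
rewrite mul_mx_diag mxE; apply: eq_bigr => k _.
by rewrite /ctmx !mxE normCK mulrCA mulrA.
Qed.

Lemma contr_of (C : numClosedFieldType) n (X : 'M[C]_n) (q : 'rV[C]_n) :
  X *m ctmx X = diag_mx q -> (forall k, 0 <= q 0 k <= 1) -> contr X.
Proof.
move=> hX hq w; rewrite [nrm2 (w *m X)]nrm2E ctmx_mul !mulmxA -(mulmxA w) hX.
rewrite quad_diag /nrm2; apply: ler_sum => k _.
have /andP [h0 h1] := hq k.
by rewrite ler_piMl // exprn_ge0.
Qed.

Lemma char_poly_horner (C : numClosedFieldType) n (A : 'M[C]_n) (x : C) :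
  (char_poly A).[x] = \det (x%:M - A).
Proof.
rewrite /char_poly -horner_evalE -det_map_mx; congr (\det _).
apply/matrixP => i j; rewrite !mxE /=.
by rewrite horner_evalE hornerD hornerN hornerC hornerMn hornerX.
Qed.

Lemma char_poly_conj (C : numClosedFieldType) n (P D : 'M[C]_n) :
  P \in unitmx -> char_poly (invmx P *m D *m P) = char_poly D.
Proof.
move=> Pu; rewrite /char_poly /char_poly_mx.
have -> : 'X%:M - map_mx polyC (invmx P *m D *m P) =
   map_mx polyC (invmx P) *m ('X%:M - map_mx polyC D) *m map_mx polyC P.
  rewrite mulmxBr mulmxBl !map_mxM; congr (_ - _).
  by rewrite -mulmxA -scalar_mxC mulmxA -map_mxM mulVmx // map_mx1 mul1mx.
rewrite !det_mulmx mulrC mulrA -det_mulmx -map_mxM mulmxV // map_mx1 det1.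
by rewrite mul1r.
Qed.

Lemma char_poly_diag (C : numClosedFieldType) n (d : 'rV[C]_n) :
  char_poly (diag_mx d) = \prod_(i < n) ('X - (d 0 i)%:P).
Proof.
rewrite char_poly_trig ?diag_mx_is_trig //; apply: eq_bigr => i _.
by rewrite mxE eqxx mulr1n.
Qed.

Lemma diag_factor (C : numClosedFieldType) n (B : 'M[C]_n) (s : 'rV[C]_n) :
  (forall i j, s 0 i = 0 -> B i j = 0) ->
  B = diag_mx s *m (diag_mx (\row_k (if s 0 k == 0 then 0 else (s 0 k)^-1)) *m B).
Proof.
move=> h; rewrite mulmxA mulmx_diag; apply/matrixP => i j; rewrite mul_diag_mx !mxE.
case: eqP => [si|si]; last by rewrite mulfV ?mul1r //; apply/eqP.
by rewrite mulr0 mul0r h.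
Qed.

Lemma main_bound (C : numClosedFieldType) (n : nat) (Z U : 'M[C]_n) (r : 'I_n -> C) :
  singular_values Z r -> unitary_mx U ->
  `|\det (1%:M - U *m Z)| <= \prod_k (1 + r k).
Proof.
move=> [r0 hr] hU.
have hUU : ctmx U *m U = 1%:M := mulmx1C hU.
set H := ctmx Z *m Z.
have Hherm : ctmx H = H by rewrite /H ctmx_mul ctmxK.
have Hnorm : H \is normalmx by apply/normalmxP; rewrite -ctmx_spec Hherm.
have /orthomx_spectralP hH := Hnorm.
set M := spectralmx H in hH.
set d := spectral_diag H in hH.
have Mu : M \is unitarymx := spectral_unitarymx H.
have hMM : M *m ctmx M = 1%:M by rewrite ctmx_spec; exact/unitarymxP.
have hMM' : ctmx M *m M = 1%:M := mulmx1C hMM.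
have iM : invmx M = ctmx M by rewrite invmx_unitary // ctmx_spec.
have hchar : \prod_(i < n) ('X - (d 0 i)%:P) = \prod_(i < n) ('X - (r i ^+ 2)%:P).
  by rewrite -char_poly_diag -hr -/H hH char_poly_conj // spectral_unit.
have hperm : perm_eq (map (fun i => d 0 i) (index_enum 'I_n))
                     (map (fun i => r i ^+ 2) (index_enum 'I_n)).
  by apply: prod_XsubC_eq; rewrite !big_map.
have d0 : forall k, 0 <= d 0 k.
  move=> k; have : d 0 k \in map (fun i => r i ^+ 2) (index_enum 'I_n).
    by rewrite -(perm_mem hperm); apply: map_f; rewrite mem_index_enum.
  by case/mapP => j _ ->; rewrite exprn_ge0.
have hprod : \prod_k (1 + sqrtC (d 0 k)) = \prod_k (1 + r k).
  rewrite -(big_map (fun i => d 0 i) xpredT (fun x => 1 + sqrtC x)).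
  rewrite (perm_big _ hperm) big_map.
  by apply: eq_bigr => k _; rewrite sqrCK.
set s := \row_k sqrtC (d 0 k).
have s0 : forall k, 0 <= s 0 k by move=> k; rewrite mxE sqrtC_ge0.
have s2 : forall k, s 0 k ^+ 2 = d 0 k by move=> k; rewrite mxE sqrtCK.
set A := U *m Z.
have hA : ctmx A *m A = H.
  by rewrite /A ctmx_mul mulmxA -(mulmxA (ctmx Z)) hUU mulmx1.
set B := M *m ctmx A.
have hB : B *m ctmx B = diag_mx d.
  rewrite /B ctmx_mul ctmxK mulmxA -(mulmxA M) hA hH iM !mulmxA hMM mul1mx.
  by rewrite -mulmxA hMM mulmx1.
set sinv := \row_k (if s 0 k == 0 then 0 else (s 0 k)^-1).
set C0 := diag_mx sinv *m B.
have hBs : B = diag_mx s *m C0.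
  apply: diag_factor => i j si.
  have hsum : (B *m ctmx B) i i = 0.
    by rewrite hB mxE eqxx mulr1n -s2 si expr0n.
  rewrite mxE in hsum.
  have hnn : forall k, predT k -> 0 <= B i k * ctmx B k i.
    by move=> k _; rewrite ctmxE mul_conjC_ge0.
  have := @psumr_eq0P _ _ predT (fun k => B i k * ctmx B k i) hnn hsum j isT.
  by rewrite ctmxE => /eqP; rewrite mul_conjC_eq0 => /eqP.
set Cc := C0 *m ctmx M.
have hCc : Cc *m ctmx Cc = diag_mx (\row_k (if s 0 k == 0 then 0 else 1)).
  rewrite /Cc ctmx_mul ctmxK mulmxA -(mulmxA C0) hMM' mulmx1 /C0 ctmx_mul mulmxA.
  rewrite -(mulmxA (diag_mx sinv)) hB ctmx_diag !mulmx_diag.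
  congr diag_mx; apply/rowP => k; rewrite !mxE.
  set t := sqrtC (d 0 k).
  have dt : d 0 k = t ^+ 2 by rewrite /t sqrtCK.
  have t0 : 0 <= t by rewrite /t sqrtC_ge0.
  rewrite dt; have [->|tN0] := eqVneq t 0.
    by rewrite !mul0r.
  rewrite geC0_conj ?invr_ge0 // expr2 mulrA mulVf // mul1r.
  by rewrite divff.
have cCc : contr Cc.
  apply: (contr_of hCc) => k; rewrite mxE; by case: (s 0 k == 0) => /=; rewrite ?lexx ?ler01.
have eA : ctmx A = ctmx M *m (diag_mx s *m C0).
  by rewrite -hBs /B mulmxA hMM' mul1mx.
have e2 : 1%:M - ctmx A = ctmx M *m (1%:M - diag_mx s *m Cc) *m M.
  rewrite eA mulmxBr mulmx1 mulmxBl hMM'; congr (_ - _).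
  by rewrite /Cc !mulmxA -(mulmxA _ (ctmx M)) hMM' mulmx1.
have hdetA : `|\det (1%:M - A)| = `|\det (1%:M - diag_mx s *m Cc)|.
  rewrite -norm_conjC -det_ctmx ctmxB ctmx1 e2 !det_mulmx mulrAC -det_mulmx hMM'.
  by rewrite det1 mul1r.
have e1 : 1%:M - diag_mx s *m Cc = diag_mx (\row_k 1) + diag_mx (- s) *m Cc.
  rewrite !mul_diag_mx; apply/matrixP => i j; by rewrite !mxE mulNr.
rewrite hdetA e1 (le_trans (key _ _ cCc)) // -hprod le_eqVlt; apply/orP; left.
apply/eqP; apply: eq_bigr => k _; rewrite !mxE normr1 normrN ger0_norm //.
by rewrite sqrtC_ge0.
Qed.

Unset Implicit Arguments.

Theorem mainTheorem2 (C : numClosedFieldType) (n : nat) (Z U : 'M[C]_n)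
  (r : 'I_n -> C) :
  singular_values Z r -> unitary_mx U ->
  \det (1%:M - U *m Z) != 0 ->
  \prod_(k < n) (`|1 - r k| / (1 + r k))
    <= `|\det (1%:M - ctmx Z *m Z)| / `|\det (1%:M - U *m Z)| ^+ 2.
Proof.
move=> hs hU hdet.
have hb := main_bound hs hU.
have [r0 hr] := hs.
have hdH : \det (1%:M - ctmx Z *m Z) = \prod_k ((1 - r k) * (1 + r k)).
  rewrite -char_poly_horner hr horner_prod; apply: eq_bigr => k _.
  by rewrite hornerXsubC -subr_sqr expr1n.
set D := `|\det (1%:M - U *m Z)| in hb *.
set Pp := \prod_k (1 + r k) in hb *.
set Pm := \prod_k `|1 - r k|.
have rp : forall k, 0 < 1 + r k by move=> k; rewrite ltr_wpDr.
have Pp0 : 0 < Pp by apply: prodr_gt0 => k _.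
have D0 : 0 < D by rewrite normr_gt0.
have Pm0 : 0 <= Pm by apply: prodr_ge0 => k _.
have -> : `|\det (1%:M - ctmx Z *m Z)| = Pm * Pp.
  rewrite hdH normr_prod /Pm /Pp -big_split /=.
  by apply: eq_bigr => k _; rewrite normrM (ger0_norm (ltW (rp k))).
rewrite prodf_div -/Pm -/Pp.
have -> : Pm / Pp = Pm * Pp / Pp ^+ 2.
  by rewrite expr2 invfM mulrA mulfK // gt_eqF.
apply: ler_wpM2l; first by rewrite mulr_ge0 // ltW.
rewrite lef_pV2 ?posrE ?exprn_gt0 //.
by rewrite !expr2 ler_pM // ltW.
Qed.
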